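(* Assume that $d_k^2 < 2p_{k+1}$ for every $k\geq1$. Then for every $n\geq 1$, $d_n \leq 2\lfloor\sqrt{p_n}\rfloor$; moreover, if $d_n = 2\lfloor \sqrt{p_n}\rfloor$ then $\lfloor\sqrt{p_{n+1}}\rfloor = \lfloor\sqrt{p_n}\rfloor + 1$.
   Context: $p_k$ denotes the $k$th prime ($p_1=2$) and $d_k := p_{k+1}-p_k$. *)

(* Defs.v *)
From mathcomp Require Import all_boot.
Set Implicit Arguments. Unset Strict Implicit. Unset Printing Implicit Defensive.

Lemma exists_prime_gt (m : nat) : exists p, (m < p) && prime p.
Proof.
have hp : prime (pdiv m`!.+1) by rewrite pdiv_prime // ltnS fact_gt0.
exists (pdiv m`!.+1); rewrite hp andbT ltnNge; apply/negP => le_pm.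
have h1 : pdiv m`!.+1 %| m`! by rewrite dvdn_fact // prime_gt0.
have h2 : pdiv m`!.+1 %| m`!.+1 by apply: pdiv_dvd.
move: h2; rewrite -[m`!.+1 in X in _ %| X]addn1 (dvdn_addr _ h1) dvdn1 => h2.
by rewrite (eqP h2) in hp.
Qed.

Definition next_prime (m : nat) : nat := ex_minn (exists_prime_gt m).

(* nth_prime k = p_k, the k-th prime with p_1 = 2 (nth_prime 0 := 1, unused) *)
Fixpoint nth_prime (k : nat) : nat :=
  match k with
  | 0 => 1
  | k'.+1 => next_prime (nth_prime k')
  end.

Definition gap (k : nat) : nat := nth_prime k.+1 - nth_prime k.

Definition isqrt (n : nat) : nat := Nat.sqrt n.

(* Main.v *)
From Stdlib Require Import PeanoNat Lia.
Require Import Defs.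
From mathcomp Require Import all_boot.
From mathcomp Require Import zify.

Lemma next_prime_gt m : m < next_prime m.
Proof. rewrite /next_prime; case: ex_minnP => q /andP[h _] _; exact h. Qed.

Lemma next_prime_eq m q : m < q -> prime q ->
  all (fun r => ~~ prime r) (iota m.+1 (q - m.+1)) -> next_prime m = q.
Proof.
move=> hmq pq hall; rewrite /next_prime; case: ex_minnP => r /andP[hr pr] hmin.
have := hmin q; rewrite hmq pq => /(_ isT) hrq.
apply/eqP; rewrite eqn_leq hrq /=; rewrite leqNgt; apply/negP => hlt.
move/allP: hall => /(_ r); rewrite mem_iota pr /= => H.
have : (m < r) && (r < m.+1 + (q - m.+1)) by apply/andP; split; lia.
by move/H.
Qed.

Lemma np1 : nth_prime 1 = 2. Proof. by apply: next_prime_eq. Qed.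
Lemma np2 : nth_prime 2 = 3. Proof. by rewrite /= -/(nth_prime 1) np1; apply: next_prime_eq. Qed.
Lemma np3 : nth_prime 3 = 5. Proof. by rewrite /= -/(nth_prime 2) np2; apply: next_prime_eq. Qed.
Lemma np4 : nth_prime 4 = 7. Proof. by rewrite /= -/(nth_prime 3) np3; apply: next_prime_eq. Qed.
Lemma np5 : nth_prime 5 = 11. Proof. by rewrite /= -/(nth_prime 4) np4; apply: next_prime_eq. Qed.

Lemma np_incr k : nth_prime k < nth_prime k.+1.
Proof. exact: next_prime_gt. Qed.

Lemma np_ge5 n : 5 <= n -> 11 <= nth_prime n.
Proof.
elim: n => // n IH; rewrite leq_eqVlt => /orP[/eqP<-|h]; first by rewrite np5.
have := np_incr n; have := IH h; lia.
Qed.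

Lemma isqrt_spec n : isqrt n * isqrt n <= n < (isqrt n).+1 * (isqrt n).+1.
Proof.
rewrite /isqrt; have [h1 h2] := Nat.sqrt_spec n (Nat.le_0_l n); apply/andP; split; lia.
Qed.

Lemma isqrt_unique n s : s * s <= n < s.+1 * s.+1 -> isqrt n = s.
Proof. move=> /andP[h1 h2]; rewrite /isqrt; apply: Nat.sqrt_unique; lia. Qed.

Theorem theorem6p1 :
  (forall k, 1 <= k -> (gap k) ^ 2 < 2 * nth_prime k.+1) ->
  forall n, 1 <= n ->
    gap n <= 2 * isqrt (nth_prime n) /\
    (gap n = 2 * isqrt (nth_prime n) ->
       isqrt (nth_prime n.+1) = (isqrt (nth_prime n)).+1).
Proof.
move=> H n hn.
case: (ltnP n 5) => h5.
  have E: forall k s, isqrt k = s -> isqrt k = s by [].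
  case: n hn h5 => [|[|[|[|[|n]]]]] // _ _; rewrite /gap.
  - rewrite np1 np2 (@isqrt_unique 2 1) // (@isqrt_unique 3 1) //.
  - rewrite np2 np3 (@isqrt_unique 3 1) // (@isqrt_unique 5 2) //.
  - rewrite np3 np4 (@isqrt_unique 5 2) // (@isqrt_unique 7 2) //.
  - rewrite np4 np5 (@isqrt_unique 7 2) // (@isqrt_unique 11 3) //.
have hp := @np_ge5 n h5.
have hi := np_incr n.
have hH := H n hn; move: hH; rewrite /gap.
set p := nth_prime n; set q := nth_prime n.+1.
have := isqrt_spec p; set s := isqrt p => /andP[hs1 hs2] hH.
have s3 : 3 <= s.
  rewrite leqNgt; apply/negP => hs; have : s.+1 * s.+1 <= 9 by
   rewrite -[9]/(3*3); apply: leq_mul. lia.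
have hd : q - p <= 2 * s.
  rewrite leqNgt; apply/negP => hlt.
  have e : q = p + (q - p) by lia.
  move: hH; rewrite e; set d := q - p => hH.
  nia.
split=> // hq.
apply: isqrt_unique; apply/andP; split; nia.
Qed.
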